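(* Let $n\geq 4$ be even and let $f:(\mathbb{P}(\mathbb{R}^n))^{n+1}\to\mathbb{R}_\varepsilon$ be a non-zero $\mathrm{GL}_n(\mathbb{R})$-equivariant map. Then $df$ does not vanish everywhere on $(\mathbb{P}(\mathbb{R}^n))^{n+2}$. (For $n=2$ this conclusion fails.)
   Context: $\mathbb{R}_\varepsilon$ is $\mathbb{R}$ with $g\in\mathrm{GL}_n(\mathbb{R})$ acting by $\operatorname{sign}\det g$; equivariance means $f(gx_0,\dots,gx_n)=\operatorname{sign}(\det g)f(x_0,\dots,x_n)$. The coboundary is $df(x_0,\dots,x_{n+1})=\sum_{i=0}^{n+1}(-1)^if(x_0,\dots,\widehat{x_i},\dots,x_{n+1})$. *)

(* Defs.v *)
From HB Require Import structures.
From Stdlib Require Import Reals Lra.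
From Stdlib Require Import ClassicalEpsilon FunctionalExtensionality.
From mathcomp Require Import all_boot all_order all_algebra.

Set Implicit Arguments.
Unset Strict Implicit.
Unset Printing Implicit Defensive.

Definition Req_bool (x y : R) : bool := if Req_EM_T x y then true else false.

Lemma Req_boolP : Equality.axiom Req_bool.
Proof. move=> x y; rewrite /Req_bool; case: Req_EM_T => h; by constructor. Qed.

HB.instance Definition _ := hasDecEq.Build R Req_boolP.

Definition R_find (P : pred R) (n : nat) : option R :=
  match excluded_middle_informative (exists x, P x) with
  | left h => Some (proj1_sig (constructive_indefinite_description _ h))
  | right _ => None
  end.

Lemma R_find_correct P n x : R_find P n = Some x -> P x.
Proof.
rewrite /R_find; case: excluded_middle_informative => // h [<-].
exact: proj2_sig (constructive_indefinite_description _ h).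
Qed.

Lemma R_find_complete (P : pred R) : (exists x, P x) -> exists n, R_find P n.
Proof. by move=> h; exists 0%N; rewrite /R_find; case: excluded_middle_informative. Qed.

Lemma R_find_ext (P Q : pred R) : P =1 Q -> R_find P =1 R_find Q.
Proof. by move=> /functional_extensionality ->. Qed.

HB.instance Definition _ :=
  hasChoice.Build R R_find_correct R_find_complete R_find_ext.

Lemma R_addA : associative Rplus. Proof. move=> *; lra. Qed.
Lemma R_addC : commutative Rplus. Proof. move=> *; lra. Qed.
Lemma R_add0 : left_id R0 Rplus. Proof. move=> *; lra. Qed.
Lemma R_addN : left_inverse R0 Ropp Rplus. Proof. move=> *; lra. Qed.

HB.instance Definition _ := GRing.isZmodule.Build R R_addA R_addC R_add0 R_addN.

Lemma R_mulA : associative Rmult. Proof. move=> *; ring. Qed.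
Lemma R_mulC : commutative Rmult. Proof. move=> *; ring. Qed.
Lemma R_mul1 : left_id R1 Rmult. Proof. move=> *; ring. Qed.
Lemma R_mulD : left_distributive Rmult Rplus. Proof. move=> *; ring. Qed.
Lemma R_one_neq0 : R1 != R0.
Proof. by apply/eqP; exact: R1_neq_R0. Qed.

HB.instance Definition _ :=
  GRing.Zmodule_isComNzRing.Build R R_mulA R_mulC R_mul1 R_mulD R_one_neq0.

Definition R_inv (x : R) : R := if Req_EM_T x R0 then R0 else Rinv x.

Lemma R_mulV (x : R) : x != R0 -> Rmult (R_inv x) x = R1.
Proof.
move=> /eqP hx; rewrite /R_inv; destruct (Req_EM_T x R0) as [e|ne].
  by case: hx.
exact: Rinv_l.
Qed.

Lemma R_inv0 : R_inv R0 = R0.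
Proof. rewrite /R_inv; destruct (Req_EM_T R0 R0); [done | by case: n]. Qed.

HB.instance Definition _ := GRing.ComNzRing_isField.Build R R_mulV R_inv0.

Local Open Scope ring_scope.

(* We identify R^n with row vectors 'rV[R]_n.  A point of P(R^n) is a
   one-dimensional linear subspace of R^n, represented canonically (via the
   MathComp row-space machinery) by the square matrix <<L>>%MS generating it:
   a matrix L with \rank L = 1 and <<L>>%MS = L. *)
Definition is_line (n : nat) (L : 'M[R]_n) : bool :=
  (\rank L == 1)%N && (<<L>>%MS == L).

Definition Proj (n : nat) := {L : 'M[R]_n | is_line L}.

(* Linear action of g in GL_n(R) on R^n (row-vector convention):
   v |-> v *m g^T, i.e. the column vector g v^T; induced action on lines. *)
Lemma act_line_proof (n : nat) (g : 'M[R]_n) (L : 'M[R]_n) :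
  g \in unitmx -> is_line L -> is_line <<L *m g^T>>%MS.
Proof.
move=> hg /andP [hr _]; apply/andP; split; last by rewrite genmx_id.
rewrite genmxE mxrankMfree //; apply/row_freeP.
by exists (invmx g^T); rewrite mulmxV // unitmx_tr.
Qed.

Definition act (n : nat) (g : 'M[R]_n) (hg : g \in unitmx) (x : Proj n) : Proj n :=
  exist _ <<val x *m g^T>>%MS (act_line_proof hg (valP x)).

Definition sign_det (n : nat) (g : 'M[R]_n) : R :=
  if Rlt_dec R0 (\det g) then 1 else -1.

Definition equivariant (n k : nat) (f : ('I_k -> Proj n) -> R) : Prop :=
  forall (g : 'M[R]_n) (hg : g \in unitmx) (x : 'I_k -> Proj n),
    f (fun i => act hg (x i)) = sign_det g * f x.

(* Homogeneous coboundary: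
   df(x_0,...,x_{k}) = sum_{i=0}^{k} (-1)^i f(x_0,..,^x_i,..,x_{k}).
   The face omitting x_i is j |-> x (lift i j). *)
Definition coboundary (n k : nat) (f : ('I_k -> Proj n) -> R)
  (x : 'I_k.+1 -> Proj n) : R :=
  \sum_(i < k.+1) (-1) ^+ i * f (fun j => x (lift i j)).

(* Main.v *)
Require Import Defs.
From HB Require Import structures.
From Stdlib Require Import Reals.
From mathcomp Require Import all_boot all_order all_algebra.
Import GRing.Theory.
Local Open Scope ring_scope.

Lemma det_rank1 (F : comNzRingType) n (u : 'cV[F]_n) (v : 'rV[F]_n) :
  \det (1%:M + u *m v) = 1 + (v *m u) 0 0.
Proof.
have e1 : block_mx (1%:M : 'M_1) (- v) u 1%:M =
   block_mx 1%:M 0 u 1%:M *m block_mx 1%:M (- v) 0 (1%:M + u *m v).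
  rewrite mulmx_block !(mulmx1, mul1mx, mul0mx, mulmx0, addr0, add0r).
  by rewrite mulmxN addrCA addNr addr0.
have e2 : block_mx (1%:M : 'M_1) (- v) u 1%:M =
   block_mx (1%:M + v *m u) (- v) 0 1%:M *m block_mx 1%:M 0 u 1%:M.
  rewrite mulmx_block !(mulmx1, mul1mx, mul0mx, mulmx0, addr0, add0r).
  by rewrite mulNmx addrK.
have := congr1 determinant e1; rewrite e2 !det_mulmx !det_ublock !det_lblock.
rewrite !det1 !mulr1 !mul1r det_mx11 => <-.
by rewrite !mxE.
Qed.

From Stdlib Require Import Lra FunctionalExtensionality Classical.
Import Num.Theory.

Lemma line_genmx n (x : Proj n) : <<val x>>%MS = val x.
Proof. by case/andP: (valP x) => _ /eqP. Qed.

Lemma ropp1 : (-1 : R) = Ropp R1. Proof. reflexivity. Qed.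
Lemma rmulE (a b : R) : a * b = Rmult a b. Proof. reflexivity. Qed.

Lemma sign_det_m1 {n} {g : 'M[R]_n} : \det g = -1 -> sign_det g = -1.
Proof.
rewrite /sign_det => ->; case: Rlt_dec => // h; exfalso; move: h.
change (~ Rlt R0 (Ropp R1)); lra.
Qed.

Lemma kill n k (f : ('I_k -> Proj n) -> R) (hf : equivariant f)
  (x : 'I_k -> Proj n) (c : 'rV[R]_n) (phi : 'cV[R]_n) :
  (c *m phi) 0 0 != 0 ->
  (forall i, val (x i) *m phi = 0 \/ val (x i) = <<c>>%MS) -> f x = 0.
Proof.
move=> hc hx.
set t := 2%:R / (c *m phi) 0 0.
have ht : t * (c *m phi) 0 0 = 2.
  by rewrite /t divfK.
set G : 'M[R]_n := 1%:M + (- t *: phi) *m c.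
have hdet : \det G^T = -1.
  rewrite det_tr det_rank1 -scalemxAr mxE mulNr ht.
  by rewrite (_ : 2%:R = 1 + 1 :> R) ?opprD ?addrA ?subrr ?add0r // -natrD.
have hg : G^T \in unitmx by rewrite unitmxE hdet unitfE oppr_eq0 oner_eq0.
have hfix : (fun i => act hg (x i)) = x.
  apply: functional_extensionality => i; apply: val_inj => /=.
  rewrite trmxK /G mulmxDr mulmx1 mulmxA.
  change (sval (x i)) with (val (x i)).
  case: (hx i) => [e | e].
    have h0 : val (x i) *m (- t *: phi) = 0.
      by rewrite -scalemxAr e scaler0.
    by rewrite h0 mul0mx addr0 line_genmx.
  rewrite e; apply/genmxP.
  have -> : <<c>>%MS + <<c>>%MS *m (- t *: phi) *m c = <<c>>%MS *m G.
    by rewrite /G mulmxDr mulmx1 mulmxA.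
  have hcG : c *m G = - c.
    rewrite /G mulmxDr mulmx1 mulmxA -scalemxAr [c *m phi]mx11_scalar.
    rewrite -scalemxAl mul_scalar_mx scalerA mulNr ht scaleNr scaler_nat mulr2n.
    by rewrite opprD addrA subrr add0r.
  apply/eqmxP; apply: eqmx_trans (eqmxMr G (genmxE c)) _.
  rewrite hcG; exact: eqmx_opp.
have := hf _ hg x; rewrite hfix (sign_det_m1 hdet : sign_det G^T = -1) => e.
have e' : f x = Rmult (Ropp R1) (f x) := e.
change (f x = R0); lra.
Qed.

Lemma mx11_eq0 (A : 'M[R]_1) : A 0 0 = 0 -> A = 0.
Proof. by move=> h; rewrite [A]mx11_scalar h; apply/matrixP=> i j; rewrite !mxE mul0rn. Qed.

Lemma gen_mul0 n (p : 'rV[R]_n) (phi : 'cV[R]_n) : p *m phi = 0 -> <<p>>%MS *m phi = 0.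
Proof. by move=> h; apply/sub_kermxP; rewrite genmxE; apply/sub_kermxP. Qed.

Lemma killC n k (f : ('I_k -> Proj n) -> R) (hf : equivariant f)
  (x : 'I_k -> Proj n) (W : 'M[R]_n) (hW : W \in unitmx) (q : 'rV[R]_n) (psi : 'cV[R]_n) :
  (q *m psi) 0 0 != 0 ->
  (forall i, (exists p : 'rV[R]_n, val (x i) = <<p *m W>>%MS /\ (p *m psi) 0 0 = 0)
      \/ val (x i) = <<q *m W>>%MS) -> f x = 0.
Proof.
move=> hq hx; apply: (@kill n k f hf x (q *m W) (invmx W *m psi)).
  by rewrite mulmxA mulmxK.
move=> i; case: (hx i) => [[p [-> hp]] | ->]; last by right.
left; apply: gen_mul0; rewrite mulmxA mulmxK //; exact: mx11_eq0.
Qed.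

Lemma killU n k (f : ('I_k -> Proj n) -> R) (hf : equivariant f)
  (x : 'I_k -> Proj n) (U : 'M[R]_n) (c : 'rV[R]_n) :
  ~~ (c <= U)%MS ->
  (forall i, (val (x i) <= U)%MS \/ val (x i) = <<c>>%MS) -> f x = 0.
Proof.
move=> hc hx; rewrite submxE in hc.
have [j hj] : exists j, (c *m cokermx U) 0 j != 0.
  apply: Classical_Prop.NNPP; move=> hne; move/eqP: hc; apply; apply/matrixP => a b.
  rewrite [a]ord1; case: (eqVneq ((c *m cokermx U) 0 b) 0) => [-> | h].
    by rewrite mxE.
  by exfalso; apply: hne; exists b.
apply: (@kill n k f hf x c (cokermx U *m delta_mx j 0)).
  by rewrite mulmxA -colE mxE.
move=> i; case: (hx i) => [h | ->]; last by right.
left; rewrite submxE in h; by rewrite mulmxA (eqP h) mul0mx.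
Qed.

Lemma line_nz n (L : Proj n) : nz_row (val L) != 0 /\ val L = <<nz_row (val L)>>%MS.
Proof.
case/andP: (valP L) => /eqP hr _.
have hL : val L != 0 by apply/eqP => h0; rewrite h0 mxrank0 in hr.
have hnz : nz_row (val L) != 0 by rewrite nz_row_eq0.
split=> //; rewrite -[LHS]line_genmx; apply/genmxP; rewrite /eqmx nz_row_sub andbT.
by rewrite -(mxrank_leqif_sup (nz_row_sub _)).2 rank_rV hnz hr.
Qed.

Definition Pv (m t : nat) : 'rV[R]_(m.+1) :=
  if t == 0%N then const_mx 1 else if (t <= m.+1)%N then delta_mx 0 (inord t.-1)
  else delta_mx 0 (inord 0) + delta_mx 0 (inord 1).

Lemma Pentry m (hm : (1 <= m)%N) t k : (k <= m)%N ->
  Pv m t 0 (inord k) = if t == 0%N then 1 else if (t <= m.+1)%N then ((t.-1 == k)%:R)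
     else ((k == 0%N)%:R + (k == 1%N)%:R).
Proof.
move=> hk; rewrite /Pv; case: eqP => _; first by rewrite mxE.
case: ifP => ht.
  rewrite mxE /= -(inj_eq val_inj) /= !inordK //.
  by rewrite eq_sym.
  by case: t ht {hk} => //= t.
rewrite !mxE /= -!(inj_eq val_inj) /= !inordK //.
Qed.

Lemma Plast m (hm : (1 <= m)%N) k : (k <= m)%N ->
  Pv m m.+2 0 (inord k) = (k == 0%N)%:R + (k == 1%N)%:R.
Proof. by move=> hk; rewrite Pentry // ltnn. Qed.

Lemma coordB n (p : 'rV[R]_n) (k l : 'I_n) :
  (p *m (delta_mx k (0 : 'I_1) - delta_mx l 0)) 0 0 = p 0 k - p 0 l.
Proof. by rewrite mulmxBr -!colE !mxE. Qed.

Lemma coordE n (p : 'rV[R]_n) (k : 'I_n) : (p *m delta_mx k (0 : 'I_1)) 0 0 = p 0 k.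
Proof. by rewrite -colE mxE. Qed.

Theorem proposition3p2 (n : nat) (hn : (4 <= n)%N) (heven : ~~ odd n)
  (f : ('I_n.+1 -> Proj n) -> R) (hf : equivariant f)
  (hnz : exists x : 'I_n.+1 -> Proj n, f x <> 0) :
  exists y : 'I_n.+2 -> Proj n, coboundary f y <> 0.
Proof.
have [m em] : exists m, n = m.+1 by exists n.-1; rewrite prednK // (leq_trans _ hn).
subst n; have hm : (3 <= m)%N by [].
have hm1 : (1 <= m)%N by apply: leq_trans hm.
have hm2 : (2 <= m)%N by apply: leq_trans hm.
case: hnz => x hx0.
pose v i := nz_row (val (x i)).
have hxv i : val (x i) = <<v i>>%MS := (line_nz _ (x i)).2.
pose U := \matrix_(j < m.+1) v (lift ord0 j).
have hUrow j : row j U = v (lift ord0 j) by rewrite rowK.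
have hsub j : (val (x (lift ord0 j)) <= U)%MS by rewrite hxv genmxE -hUrow row_sub.
have hU : U \in unitmx.
  case: (boolP (U \in unitmx)) => // hU; exfalso; apply: hx0.
  have h1 : ~~ (1%:M <= U)%MS by rewrite sub1mx row_full_unit.
  case: (boolP (v ord0 <= U)%MS) => h0.
    case/row_subPn: h1 => r hr.
    apply: (@killU _ _ f hf x U _ hr) => i; left.
    case: (unliftP ord0 i) => [j ->|->]; first exact: hsub.
    by rewrite hxv genmxE.
  apply: (@killU _ _ f hf x U _ h0) => i.
  case: (unliftP ord0 i) => [j ->|->]; [left; exact: hsub | right; exact: hxv].
pose a := v ord0 *m invmx U.
have ha : v ord0 = a *m U by rewrite mulmxKV.
have hak k : a 0 k != 0.
  apply/negP => /eqP hk; apply: hx0.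
  apply: (@killC _ _ f hf x U hU (delta_mx 0 k) (delta_mx k 0)).
    by rewrite coordE mxE !eqxx /= oner_neq0.
  move=> i; case: (unliftP ord0 i) => [j ->|->].
    case: (eqVneq j k) => [-> | hjk].
      by right; rewrite hxv -rowE hUrow.
    left; exists (delta_mx 0 j); split; first by rewrite -rowE hUrow hxv.
    by rewrite coordE mxE eq_sym (negbTE hjk) andbF.
  left; exists a; split; first by rewrite hxv ha.
  by rewrite coordE.
pose W := diag_mx a *m U.
have hW : W \in unitmx.
  rewrite unitmx_mul hU andbT unitmxE det_diag unitfE.
  by apply/prodf_neq0 => k _; exact: hak.
have hX (j : 'I_m.+2) : val (x j) = <<Pv m j *m W>>%MS.
  case: (unliftP ord0 j) => [k ->|->].
    have hP : Pv m (lift ord0 k) = delta_mx 0 k.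
      have hk1 : (bump 0 k <= m.+1)%N by rewrite /bump leq0n add1n; exact: ltn_ord.
      by rewrite /Pv /= hk1 add0n inord_val.
    rewrite hP hxv /W mulmxA.
    have -> : delta_mx (0 : 'I_1) k *m diag_mx a = a 0 k *: delta_mx 0 k.
      apply/matrixP => r s; rewrite mul_mx_diag !mxE.
      have [-> | ne] := eqVneq s k; first by rewrite mulrC.
      by rewrite !andbF /= mulr0n mul0r mulr0.
    rewrite -scalemxAl -rowE hUrow; apply/genmxP; apply/eqmxP; apply: eqmx_sym.
    exact: eqmx_scale.
  have hP : Pv m ord0 = const_mx 1 by rewrite /Pv.
  rewrite hxv ha hP /W mulmxA; congr (<< _ >>%MS); congr (_ *m _).
  by apply/matrixP => r s; rewrite mul_mx_diag !mxE mul1r [r]ord1.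
pose w := Pv m m.+2 *m W.
have hw0 : w != 0.
  apply/eqP => hw; have : Pv m m.+2 = 0 by rewrite -(mulmxK hW (Pv m m.+2)) -/w hw mul0mx.
  move/matrixP/(_ 0 (inord 0)); rewrite Plast // mxE /= => h.
  move: h; rewrite ?mulr1n ?mulr0n addr0 => h.
  by move: (oner_neq0 R); rewrite h eqxx.
have hwl : is_line <<w>>%MS.
  by apply/andP; split; [rewrite genmxE rank_rV hw0 | rewrite genmx_id].
pose wL : Proj m.+1 := exist _ <<w>>%MS hwl.
pose y (i : 'I_m.+3) : Proj m.+1 :=
  if (insub (val i) : option 'I_m.+2) is Some j then x j else wL.
have hY (i : 'I_m.+3) : val (y i) = <<Pv m i *m W>>%MS.
  rewrite /y; case: insubP => [j _ hj | hi]; first by rewrite hX hj.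
  have -> : val i = m.+2.
    by apply/eqP; rewrite eqn_leq -ltnS ltn_ord leqNgt.
  by [].
have hface (i : 'I_m.+3) (tq : nat) (psi : 'cV[R]_m.+1) :
    (Pv m tq *m psi) 0 0 != 0 ->
    (forall t, (t < m.+3)%N -> t != i -> t != tq -> (Pv m t *m psi) 0 0 = 0) ->
    f (fun j => y (lift i j)) = 0.
  move=> hq ht; apply: (@killC _ _ f hf _ W hW (Pv m tq) psi hq) => j.
  case: (eqVneq (val (lift i j)) tq) => [e | ne]; first by right; rewrite hY e.
  left; exists (Pv m (lift i j)); split; first exact: hY.
  apply: ht => //.
  by rewrite (inj_eq val_inj) eq_sym neq_lift.
exists y; rewrite /coboundary big_ord_recr /=.
rewrite big1 ?add0r => [|i _].
  have -> : (fun j => y (lift ord_max j)) = x.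
    apply: functional_extensionality => j; rewrite /y.
    have -> : val (lift ord_max j) = val j := lift_max j.
    by rewrite valK.
  by apply/eqP; rewrite mulf_neq0 ?signr_eq0 //; apply/eqP.
rewrite (_ : f _ = 0) ?mulr0 //.
have hi : (val i <= m.+1)%N by rewrite -ltnS ltn_ord.
have hwi : val (widen_ord (leqnSn m.+2) i) = val i by [].
case hi0 : (val i) => [|s].
  apply: (hface _ 3%N (delta_mx (inord 2) 0)).
    by rewrite coordE Pentry // /= ltnS hm2 /= mulr1n oner_neq0.
  move=> t ht ti tq; rewrite hwi hi0 in ti.
  rewrite coordE Pentry // (negbTE ti).
  have -> : (t.-1 == 2%N) = false by case: t tq ti {ht} => [|[|[|[|t]]]].
  by case: ifP => _ /=; rewrite ?mulr0n ?addr0.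
case: s hi0 => [|[|s]] hi0.
- apply: (hface _ 2%N (delta_mx (inord 1) 0 - delta_mx (inord 0) 0)).
    have h1m : (1 < m.+1)%N by rewrite ltnS.
    by rewrite coordB !Pentry // h1m /= mulr1n mulr0n subr0 oner_neq0.
  move=> t ht ti tq; rewrite hwi hi0 in ti.
  rewrite coordB !Pentry //.
  case: t ht ti tq => [|[|[|t]]] ht ti tq //=; first by rewrite subrr.
  by case: (t.+2 < m.+1)%N; rewrite ?subrr // add0r addr0 subrr.
- apply: (hface _ 1%N (delta_mx (inord 0) 0 - delta_mx (inord 1) 0)).
    by rewrite coordB !Pentry // /= mulr1n mulr0n subr0 oner_neq0.
  move=> t ht ti tq; rewrite hwi hi0 in ti.
  rewrite coordB !Pentry //.
  case: t ht ti tq => [|[|[|t]]] ht ti tq //=; first by rewrite subrr.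
  by case: (t.+2 < m.+1)%N; rewrite ?subrr // add0r addr0 subrr.
have hs : (s.+2 <= m)%N by rewrite hi0 in hi.
apply: (hface _ 0%N (delta_mx (inord s.+2) 0)).
  by rewrite coordE Pentry //= oner_neq0.
move=> t ht ti tq; rewrite hwi hi0 in ti.
rewrite coordE Pentry //.
case: t ht ti tq => [|t] ht ti tq //=.
move: ti; rewrite eqSS => ti.
by case: ifP => _ /=; rewrite ?(negbTE ti) ?mulr0n ?addr0.
Qed.
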